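(* Let $N,l$ be positive integers with $l<N$, let $\hat a(\xi)=\cos^{2N}(\xi/2)\sum_{j=0}^{l}\binom{N-1+j}{j}\sin^{2j}(\xi/2)$ be the mask of the pseudo spline of type II of order $(N,l)$, and let $\hat b(\xi)=e^{-i\xi}\overline{\hat a(\xi+\pi)}$. Then for all $0\le\alpha<\beta\le\pi$ and all $\xi\in\mathbb R$, $$|\hat b(\alpha)|\,\chi_{[-\beta,-\alpha]\cup[\alpha,\beta]}(\xi)\le|\hat b(\xi)|\le\min\Big\{1,\ \frac{\sum_{j=0}^{l}\binom{N+l}{j}}{2^{2N}}|\xi|^{2N}\Big\}.$$ *)

(* Defs.v *)
From Stdlib Require Import Reals ClassicalEpsilon.
From Coquelicot Require Import Coquelicot.
Open Scope R_scope.

Definition binomR (n k : nat) : R := Binomial.C n k.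

Definition cexpi (t : R) : C := (cos t, sin t).

Definition pseudo_mask_II (N l : nat) (xi : R) : R :=
  (cos (xi / 2)) ^ (2 * N) *
  sum_f_R0 (fun j => binomR (N - 1 + j) j * (sin (xi / 2)) ^ (2 * j)) l.

Definition pseudo_b (N l : nat) (xi : R) : C :=
  Cmult (cexpi (- xi)) (Cconj (RtoC (pseudo_mask_II N l (xi + PI)))).

Definition indicator (S : R -> Prop) (x : R) : R :=
  if excluded_middle_informative (S x) then 1 else 0.

(* Main.v *)
Require Import Defs.
From Stdlib Require Import Reals Lra Lia ClassicalEpsilon.
From Coquelicot Require Import Coquelicot.
Open Scope R_scope.

Definition cc (m j : nat) : R := binomR (m + j) j.
Definition FF (m l : nat) (s : R) : R :=
  s ^ (S m) * sum_f_R0 (fun j => cc m j * (1 - s) ^ j) l.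
Definition DD (m l : nat) (s : R) : R :=
  INR (S m + l) * cc m l * (1 - s) ^ l * s ^ m.

Lemma cc_eq m j : cc m j = INR (Factorial.fact (m + j)) / (INR (Factorial.fact j) * INR (Factorial.fact m)).
Proof.
  unfold cc, binomR, Binomial.C. replace (m + j - j)%nat with m by lia. reflexivity.
Qed.

Lemma cc_rec m l : cc m (S l) * INR (S l) = INR (S m + l) * cc m l.
Proof.
  rewrite !cc_eq.
  replace (m + S l)%nat with (S (m + l)) by lia.
  rewrite !Rfunctions.fact_simpl, !mult_INR.
  replace (S m + l)%nat with (S (m + l)) by lia.
  assert (INR (Factorial.fact l) <> 0) by (apply INR_fact_neq_0).
  assert (INR (Factorial.fact m) <> 0) by (apply INR_fact_neq_0).
  assert (INR (S l) <> 0) by (apply not_0_INR; lia).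
  field. auto.
Qed.

Lemma cc0 m : cc m 0 = 1.
Proof. rewrite cc_eq, Nat.add_0_r. simpl. field. apply INR_fact_neq_0. Qed.

Lemma FF_deriv m l s : is_derive (FF m l) s (DD m l s).
Proof.
  induction l as [|l IH].
  - unfold FF, DD. simpl sum_f_R0. rewrite cc0.
    auto_derive; auto. rewrite Nat.add_0_r. simpl pow. rewrite S_INR; destruct m; simpl; ring.
  - apply is_derive_ext with
      (f := fun s => FF m l s + cc m (S l) * (s ^ (S m) * (1 - s) ^ (S l))).
    { intros t. unfold FF. simpl sum_f_R0. change (@eq R (t ^ S m * sum_f_R0 (fun j : nat => cc m j * (1 - t) ^ j) l + cc m (S l) * (t ^ S m * (1 - t) ^ S l)) (t ^ S m * (sum_f_R0 (fun j : nat => cc m j * (1 - t) ^ j) l + cc m (S l) * ((1 - t) * (1 - t) ^ l)))). simpl pow. ring. }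
    replace (DD m (S l) s) with
      (DD m l s + cc m (S l) * (INR (S m) * s ^ m * (1 - s) ^ S l
                                 - s ^ S m * (INR (S l) * (1 - s) ^ l))).
    2:{ unfold DD. replace (INR (S m + S l)) with (INR (S m) + INR (S l))
          by (rewrite plus_INR; reflexivity).
        rewrite <- (cc_rec m l). simpl pow. ring. }
    assert (H2 : is_derive (fun s => cc m (S l) * (s ^ (S m) * (1 - s) ^ (S l))) s
       (cc m (S l) * (INR (S m) * s ^ m * (1 - s) ^ S l
                                 - s ^ S m * (INR (S l) * (1 - s) ^ l)))).
    { auto_derive; auto. simpl pred. change (match m with 0%nat => 1 | S _ => INR m + 1 end) with (INR (S m)); change (match l with 0%nat => 1 | S _ => INR l + 1 end) with (INR (S l)). unfold Rminus. rewrite <- !tech_pow_Rmult. ring. }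
    exact (is_derive_plus _ _ _ _ _ IH H2).
Qed.

Lemma cc_ge0 m j : 0 <= cc m j.
Proof.
  rewrite cc_eq. unfold Rdiv. apply Rmult_le_pos; [apply pos_INR|].
  left. apply Rinv_0_lt_compat, Rmult_lt_0_compat; apply INR_fact_lt_0.
Qed.

Lemma FF_mono m l a b : 0 <= a -> a <= b -> b <= 1 -> FF m l a <= FF m l b.
Proof.
  intros Ha Hab Hb.
  destruct (MVT_gen (FF m l) a b (DD m l)) as [c [Hc Heq]].
  - intros x _. apply FF_deriv.
  - intros x _. apply continuity_pt_filterlim.
    apply (ex_derive_continuous (K:=R_AbsRing) (V:=R_NormedModule) (FF m l)).
    eexists. apply FF_deriv.
  - rewrite Rmin_left in Hc by lra. rewrite Rmax_right in Hc by lra.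
    assert (0 <= DD m l c).
    { unfold DD. apply Rmult_le_pos; [apply Rmult_le_pos; [apply Rmult_le_pos|]|].
      apply pos_INR. apply cc_ge0. apply pow_le; lra. apply pow_le; lra. }
    assert (0 <= DD m l c * (b - a)) by (apply Rmult_le_pos; lra). lra.
Qed.

Lemma FF_ge0 m l s : 0 <= s <= 1 -> 0 <= FF m l s.
Proof.
  intros Hs. unfold FF. apply Rmult_le_pos. apply pow_le; lra.
  apply cond_pos_sum. intros j. apply Rmult_le_pos. apply cc_ge0. apply pow_le; lra.
Qed.

Lemma FF_1 m l : FF m l 1 = 1.
Proof.
  unfold FF. rewrite pow1, Rmult_1_l. induction l as [|l IH].
  - simpl. rewrite cc0. ring.
  - simpl sum_f_R0. rewrite IH. replace (1 - 1) with 0 by ring. simpl. ring.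
Qed.

Lemma binom_mono n k d : (k <= n)%nat -> binomR n k <= binomR (n + d) k.
Proof.
  intros Hk. induction d as [|d IH].
  - rewrite Nat.add_0_r. lra.
  - eapply Rle_trans; [exact IH|]. replace (n + S d)%nat with (S (n + d)) by lia.
    destruct k as [|k].
    + unfold binomR, Binomial.C. rewrite !Nat.sub_0_r.
      right. field. repeat split; apply INR_fact_neq_0.
    + unfold binomR. rewrite <- pascal by lia.
      assert (0 <= Binomial.C (n + d) k).
      { unfold Binomial.C, Rdiv. apply Rmult_le_pos; [apply pos_INR|].
        left. apply Rinv_0_lt_compat, Rmult_lt_0_compat; apply INR_fact_lt_0. }
      lra.
Qed.

Lemma FF_upper m l s : 0 <= s <= 1 ->
  FF m l s <= s ^ S m * sum_f_R0 (fun j => binomR (S m + l) j) l.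
Proof.
  intros Hs. unfold FF. apply Rmult_le_compat_l. apply pow_le; lra.
  apply sum_Rle. intros j Hj.
  apply Rle_trans with (cc m j).
  - rewrite <- (Rmult_1_r (cc m j)) at 2. apply Rmult_le_compat_l. apply cc_ge0.
    assert (Hp : (1-s)^j <= 1^j) by (apply pow_incr; lra). rewrite pow1 in Hp. exact Hp.
  - unfold cc. replace (S m + l)%nat with (m + j + (S l - j))%nat by lia.
    apply binom_mono. lia.
Qed.

Lemma abs_sin_le x : Rabs (sin x) <= Rabs x.
Proof.
  assert (H: forall y, 0 < y -> Rabs (sin y) <= y).
  { intros y Hy. pose proof (sin_lt_x y Hy). pose proof (SIN_bound y).
    destruct (Rle_dec y PI).
    - assert (0 <= sin y) by (apply sin_ge_0; lra). rewrite Rabs_pos_eq; lra.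
    - pose proof PI2_1 as HPI. apply Rabs_le; lra. }
  destruct (Rtotal_order x 0) as [Hx|[Hx|Hx]].
  - rewrite <- (Rabs_Ropp x), <- (Rabs_Ropp (sin x)), <- sin_neg.
    rewrite (Rabs_pos_eq (-x)) by lra. apply H. lra.
  - subst. rewrite sin_0. lra.
  - rewrite (Rabs_pos_eq x) by lra. apply H. lra.
Qed.

Lemma Cmod_b N l xi : Cmod (pseudo_b N l xi) = Rabs (pseudo_mask_II N l (xi + PI)).
Proof.
  unfold pseudo_b. rewrite Cmod_mult, Cmod_conj, Cmod_R.
  replace (Cmod (cexpi (- xi))) with 1. ring.
  unfold Cmod, cexpi. simpl fst. simpl snd. rewrite <- sqrt_1. f_equal.
  pose proof (sin2_cos2 (- xi)). unfold Rsqr in *. simpl pow. lra.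
Qed.

Lemma mask_eq m l xi : pseudo_mask_II (S m) l (xi + PI) = FF m l (sin (xi / 2) ^ 2).
Proof.
  unfold pseudo_mask_II, FF.
  replace ((xi + PI) / 2) with (xi / 2 + PI / 2) by field.
  rewrite cos_plus, sin_plus, cos_PI2, sin_PI2.
  replace (cos (xi / 2) * 0 - sin (xi / 2) * 1) with (- sin (xi / 2)) by ring.
  replace (sin (xi / 2) * 0 + cos (xi / 2) * 1) with (cos (xi / 2)) by ring.
  rewrite pow_mult. replace ((- sin (xi / 2)) ^ 2) with (sin (xi / 2) ^ 2) by ring.
  f_equal. apply sum_eq. intros i _. unfold cc.
  replace (S m - 1 + i)%nat with (m + i)%nat by lia. f_equal.
  rewrite pow_mult. f_equal.
  pose proof (sin2_cos2 (xi / 2)). unfold Rsqr in *. simpl pow. lra.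
Qed.

Lemma s_bounds x : 0 <= sin x ^ 2 <= 1.
Proof. pose proof (SIN_bound x). simpl pow. nra. Qed.

Theorem mainTheorem5 (N l : nat) (hN : (0 < N)%nat) (hl : (0 < l)%nat)
  (hlN : (l < N)%nat) (alpha beta : R)
  (h0a : 0 <= alpha) (hab : alpha < beta) (hbpi : beta <= PI) (xi : R) :
  Cmod (pseudo_b N l alpha) *
    indicator (fun x => (- beta <= x <= - alpha) \/ (alpha <= x <= beta)) xi
    <= Cmod (pseudo_b N l xi)
  /\ Cmod (pseudo_b N l xi)
     <= Rmin 1 (sum_f_R0 (fun j => binomR (N + l) j) l / 2 ^ (2 * N)
                * Rabs xi ^ (2 * N)).
Proof.
  destruct N as [|m]; [lia|].
  rewrite !Cmod_b, !mask_eq.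
  pose proof (s_bounds (xi / 2)) as Hs.
  pose proof (s_bounds (alpha / 2)) as Ha.
  rewrite (Rabs_pos_eq (FF _ _ (sin (xi/2) ^ 2))) by (apply FF_ge0; lra).
  rewrite (Rabs_pos_eq (FF _ _ (sin (alpha/2) ^ 2))) by (apply FF_ge0; lra).
  split.
  - unfold indicator. destruct (excluded_middle_informative _) as [H|H].
    + rewrite Rmult_1_r. apply FF_mono; try lra.
      pose proof PI2_1.
      assert (Hy : exists y, alpha <= y <= beta /\ sin (xi / 2) ^ 2 = sin (y / 2) ^ 2).
      { destruct H as [H|H].
        - exists (- xi). split. lra. replace (xi / 2) with (- (- xi / 2)) by field.
          rewrite sin_neg. ring.
        - exists xi. split; auto. }
      destruct Hy as [y [Hy Hye]]. rewrite Hye.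
      assert (sin (alpha / 2) <= sin (y / 2)) by (apply sin_incr_1; lra).
      assert (0 <= sin (alpha / 2)) by (apply sin_ge_0; lra).
      apply pow_incr. lra.
    + rewrite Rmult_0_r. apply FF_ge0. lra.
  - apply Rmin_glb.
    + rewrite <- (FF_1 m l). apply FF_mono; lra.
    + eapply Rle_trans; [apply FF_upper; lra|].
      set (S := sum_f_R0 (fun j => binomR (S m + l) j) l).
      assert (HS : 0 <= S).
      { apply cond_pos_sum. intros j. unfold binomR, Binomial.C, Rdiv.
        apply Rmult_le_pos; [apply pos_INR|].
        left. apply Rinv_0_lt_compat, Rmult_lt_0_compat; apply INR_fact_lt_0. }
      replace (S / 2 ^ (2 * Datatypes.S m) * Rabs xi ^ (2 * Datatypes.S m))
        with (S * ((Rabs xi / 2) ^ 2) ^ Datatypes.S m).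
      2:{ rewrite <- pow_mult. unfold Rdiv. rewrite Rpow_mult_distr, pow_inv. ring. }
      rewrite Rmult_comm. apply Rmult_le_compat_l; auto.
      apply pow_incr. split; [lra|].
      rewrite <- pow2_abs.
      replace (Rabs xi / 2) with (Rabs (xi / 2)).
      2:{ unfold Rdiv. rewrite Rabs_mult, Rabs_inv, (Rabs_pos_eq 2) by lra. reflexivity. }
      apply pow_incr. split. apply Rabs_pos. apply abs_sin_le.
Qed.
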